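(* Let $\sigma$ be a gradual semantics satisfying Stability, let $\mathcal{Q}=\langle\mathcal{A},\mathcal{R}^-,\mathcal{R}^+,\tau\rangle$ be a QBAF and $\alpha\in\mathcal{A}$. (1) If $\sigma(\alpha)>\tau(\alpha)$, then there exists $r\in\mathcal{R}$ with $\phi^\alpha_\sigma(r)>0$. (2) If $\sigma(\alpha)<\tau(\alpha)$, then there exists $r\in\mathcal{R}$ with $\phi^\alpha_\sigma(r)<0$.
   Context: A QBAF is a quadruple $\mathcal{Q}=\langle\mathcal{A},\mathcal{R}^-,\mathcal{R}^+,\tau\rangle$ with $\mathcal{A}$ a finite set of arguments, $\mathcal{R}^-,\mathcal{R}^+\subseteq\mathcal{A}\times\mathcal{A}$ disjoint attack and support relations, and $\tau:\mathcal{A}\to[0,1]$ base scores; $\mathcal{R}=\mathcal{R}^-\cup\mathcal{R}^+$. A gradual semantics $\sigma$ assigns to each QBAF a strength $\sigma(\alpha)\in[0,1]$ to every argument; it is assumed well-defined on every QBAF considered. For $\mathcal{S}\subseteq\mathcal{R}$, $\sigma_{\mathcal{S}}(\alpha)$ denotes the strength of $\alpha$ in $\langle\mathcal{A},\mathcal{R}^-\cap\mathcal{S},\mathcal{R}^+\cap\mathcal{S},\tau\rangle$. The RAE from $r\in\mathcal{R}$ to $\alpha$ under $\sigma$ is $$\phi^\alpha_\sigma(r)=\sum_{\mathcal{S}\subseteq\mathcal{R}\setminus\{r\}}\frac{(|\mathcal{R}|-|\mathcal{S}|-1)!\,|\mathcal{S}|!}{|\mathcal{R}|!}\big[\sigma_{\mathcal{S}\cup\{r\}}(\alpha)-\sigma_{\mathcal{S}}(\alpha)\big].$$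 $\sigma$ satisfies Stability if in every QBAF, every argument with no incoming edges has strength equal to its base score. *)

(* Defs.v *)
From HB Require Import structures.
From mathcomp Require Import all_boot all_order all_algebra.
Set Implicit Arguments. Unset Strict Implicit. Unset Printing Implicit Defensive.
Import Order.TTheory GRing.Theory Num.Theory.
Local Open Scope ring_scope.

Record qbaf (R : realFieldType) (A : finType) := QBAF {
  att : {set A * A};
  sup : {set A * A};
  tau : A -> R;
  att_sup_disj : att :&: sup = set0;
  tau_01 : forall a, 0 <= tau a <= 1 }.

Definition edges R A (Q : qbaf R A) : {set A * A} := att Q :|: sup Q.

Lemma restrict_disj R A (Q : qbaf R A) (S : {set A * A}) :
  (att Q :&: S) :&: (sup Q :&: S) = set0.
Proof.
apply/eqP; rewrite -subset0 -(att_sup_disj Q).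
apply/subsetP => x; rewrite !inE.
by case: (x \in att Q); case: (x \in sup Q); case: (x \in S).
Qed.

Definition restrict R A (Q : qbaf R A) (S : {set A * A}) : qbaf R A :=
  @QBAF R A (att Q :&: S) (sup Q :&: S) (tau Q) (restrict_disj Q S) (tau_01 Q).

Definition semantics (R : realFieldType) := forall A : finType, qbaf R A -> A -> R.

Definition gradual R (sigma : semantics R) : Prop :=
  forall (A : finType) (Q : qbaf R A) (a : A), 0 <= sigma A Q a <= 1.

Definition stability R (sigma : semantics R) : Prop :=
  forall (A : finType) (Q : qbaf R A) (a : A),
    (forall b : A, (b, a) \notin edges Q) -> sigma A Q a = tau Q a.

Definition RAE R (sigma : semantics R) A (Q : qbaf R A) (alpha : A) (r : A * A) : R :=
  \sum_(S in powerset (edges Q :\ r))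
    ((#|edges Q| - #|S| - 1)`!%:R * (#|S|)`!%:R / (#|edges Q|)`!%:R) *
    (sigma A (restrict Q (S :|: [set r])) alpha - sigma A (restrict Q S) alpha).

(* Main.v *)
Require Import Defs.
From mathcomp Require Import all_boot all_order all_algebra.
From mathcomp Require Import zify ring.
Import Order.TTheory GRing.Theory Num.Theory.
Local Open Scope ring_scope.

Section Eff.
Variables (R : realFieldType) (T : finType) (E : {set T}) (v : {set T} -> R).

Let n := #|E|.
Let w (s : nat) : R := (n - s - 1)`!%:R * s`!%:R / n`!%:R.
Let c (s : nat) : R := (n - s)`!%:R * s`!%:R / n`!%:R.

Lemma sum_drop (P : pred {set T}) (x0 : {set T}) (F G : {set T} -> R) :
  P x0 -> (forall x, P x -> x != x0 -> G x = F x) -> G x0 = 0 ->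
  \sum_(x | P x) G x = \sum_(x | P x) F x - F x0.
Proof.
move=> Px0 HG HG0.
rewrite (bigD1 x0) //= [in RHS](bigD1 x0) //= HG0 add0r addrAC subrr add0r.
by apply: eq_bigr => x /andP[Px nx]; rewrite HG.
Qed.

Lemma stepB1 r : r \in E ->
  \sum_(S in powerset (E :\ r)) w #|S| * v (S :|: [set r]) =
  \sum_(U : {set T} | (U \subset E) && (r \in U)) w (#|U|.-1) * v U.
Proof.
move=> rE.
rewrite [RHS](reindex_onto (fun S => S :|: [set r]) (fun U => U :\ r)); last first.
  move=> U /andP[_ rU]; apply/setP => x; rewrite !inE.
  by case: (eqVneq x r) => [->|]; rewrite ?rU ?orbT ?orbF.
apply: eq_big => S.
  rewrite inE subsetD1 subUset sub1set rE andbT !inE eqxx orbT andbT.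
  case: (S \subset E) => //=.
  case rS: (r \in S) => /=.
    apply/esym/negbTE/eqP => h.
    have : r \in (S :|: [set r]) :\ r by rewrite h.
    by rewrite !inE eqxx.
  apply/esym/eqP/setP => x; rewrite !inE.
  by case: (eqVneq x r) => [->|]; rewrite ?rS ?orbF.
rewrite inE subsetD1 => /andP[_ rS].
by rewrite setUC cardsU1 rS.
Qed.

Lemma stepC1 (f : {set T} -> R) :
  \sum_(r in E) \sum_(U : {set T} | (U \subset E) && (r \in U)) f U =
  \sum_(U : {set T} | U \subset E) #|U|%:R * f U.
Proof.
rewrite ((@exchange_big_dep _ _ _ _ _ _ _ _ _ (fun U : {set T} => U \subset E))) /=; last by move=> ? ? _ /andP[].
apply: eq_bigr => U sUE.
rewrite (eq_bigl (fun r => r \in U)); last first.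
  move=> r /=; rewrite sUE /=; case rU: (r \in U); last by rewrite andbF.
  by rewrite (subsetP sUE).
by rewrite sumr_const mulr_natl.
Qed.

Lemma stepC2 (f : {set T} -> R) :
  \sum_(r in E) \sum_(S in powerset (E :\ r)) f S =
  \sum_(S : {set T} | S \subset E) (n - #|S|)%:R * f S.
Proof.
rewrite (eq_bigr (fun r => \sum_(S : {set T} | (S \subset E) && (r \notin S)) f S)); last first.
  by move=> r _; apply: eq_bigl => S; rewrite inE subsetD1.
rewrite ((@exchange_big_dep _ _ _ _ _ _ _ _ _ (fun U : {set T} => U \subset E))) /=; last by move=> ? ? _ /andP[].
apply: eq_bigr => S sSE.
rewrite (eq_bigl (fun r => r \in E :\: S)); last first.
  by move=> r /=; rewrite sSE !inE andbC.
rewrite sumr_const mulr_natl cardsD.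
by move/setIidPr: sSE => ->.
Qed.

Lemma factn0 k : (k`!%:R : R) != 0.
Proof. by rewrite pnatr_eq0 -lt0n fact_gt0. Qed.

Lemma coefD1 (S : {set T}) : S \subset E ->
  #|S|%:R * w (#|S|.-1) = if S == set0 then 0 else c #|S|.
Proof.
move=> sSE; rewrite -cards_eq0 /w /c.
have : (#|S| <= n)%N by exact: subset_leq_card.
case: #|S| => [|k] hk /=; first by rewrite mul0r.
rewrite factS natrM.
have -> : (n - k - 1 = n - k.+1)%N by lia.
by rewrite !mulrA [_ * (n - k.+1)`!%:R]mulrC.
Qed.

Lemma coefD2 (S : {set T}) : S \subset E ->
  (n - #|S|)%:R * w #|S| = if S == E then 0 else c #|S|.
Proof.
move=> sSE; rewrite eqEcard sSE /= /w /c.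
have : (#|S| <= n)%N by exact: subset_leq_card.
rewrite -/n.
case: (leqP n #|S|) => h1 h2.
  have -> : (n - #|S| = 0)%N by lia.
  by rewrite mul0r.
have [m hm] : exists m, (n - #|S| = m.+1)%N by exists (n - #|S|).-1; lia.
rewrite hm.
rewrite subn1 /=.
by rewrite factS natrM !mulrA.
Qed.

Lemma efficiency :
  \sum_(r in E) \sum_(S in powerset (E :\ r)) w #|S| * (v (S :|: [set r]) - v S)
  = v E - v set0.
Proof.
rewrite (eq_bigr (fun r => \sum_(S in powerset (E :\ r)) w #|S| * v (S :|: [set r])
   - \sum_(S in powerset (E :\ r)) w #|S| * v S)); last first.
  by move=> r _; rewrite -sumrB; apply: eq_bigr => S _; rewrite mulrBr.
rewrite sumrB.
under eq_bigr => r rE do rewrite stepB1 //.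
rewrite stepC1 stepC2.
rewrite (eq_bigr (fun S => (if S == set0 then 0 else c #|S|) * v S)); last first.
  by move=> S sSE; rewrite mulrA coefD1.
rewrite [X in _ - X](eq_bigr (fun S => (if S == E then 0 else c #|S|) * v S)); last first.
  by move=> S sSE; rewrite mulrA coefD2.
rewrite (@sum_drop _ set0 (fun S => c #|S| * v S)); try exact: sub0set;
  try (by move=> x _ /negbTE ->); try (by rewrite eqxx mul0r).
rewrite [X in _ - X](@sum_drop _ E (fun S => c #|S| * v S)); try exact: subxx;
  try (by move=> x _ /negbTE ->); try (by rewrite eqxx mul0r).
rewrite /c cards0 -/n subn0 subnn fact0 mul1r mulr1 divff ?factn0 // mul1r.
rewrite mul1r.
ring.
Qed.
End Eff.

Lemma restrict_full (R : realFieldType) (A : finType) (Q : qbaf R A) :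
  restrict Q (edges Q) = Q.
Proof.
case: Q => at0 su ta H H2; rewrite /restrict /edges /=.
move: (restrict_disj _ _) => /=.
have -> : at0 :&: (at0 :|: su) = at0 by apply/setP => x; rewrite !inE; case: (x \in at0).
have -> : su :&: (at0 :|: su) = su by apply/setP => x; rewrite !inE; case: (x \in su); rewrite ?orbT.
by move=> H'; rewrite (eq_irrelevance H' H).
Qed.

Theorem corollary1 (R : realFieldType) (sigma : semantics R)
  (Hgrad : gradual sigma) (Hstab : stability sigma)
  (A : finType) (Q : qbaf R A) (alpha : A) :
  (tau Q alpha < sigma A Q alpha ->
     exists2 r, r \in edges Q & 0 < RAE sigma Q alpha r) /\
  (sigma A Q alpha < tau Q alpha ->
     exists2 r, r \in edges Q & RAE sigma Q alpha r < 0).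
Proof.
have eff : \sum_(r in edges Q) RAE sigma Q alpha r = sigma A Q alpha - tau Q alpha.
  have := @efficiency R _ (edges Q) (fun S => sigma A (restrict Q S) alpha).
  rewrite /RAE /= restrict_full => ->.
  rewrite (Hstab _ (restrict Q set0)) //= => b; rewrite /edges /= !inE.
  by rewrite !andbF.
split => H.
  have [/exists_inP //|] := boolP [exists r in edges Q, 0 < RAE sigma Q alpha r].
  rewrite negb_exists_in => /forall_inP Hr.
  have : \sum_(r in edges Q) RAE sigma Q alpha r <= 0.
    by apply: sumr_le0 => r /Hr; rewrite -leNgt.
  by rewrite eff subr_le0 leNgt H.
have [/exists_inP //|] := boolP [exists r in edges Q, RAE sigma Q alpha r < 0].
rewrite negb_exists_in => /forall_inP Hr.
have : 0 <= \sum_(r in edges Q) RAE sigma Q alpha r.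
  by apply: sumr_ge0 => r /Hr; rewrite -leNgt.
by rewrite eff subr_ge0 leNgt H.
Qed.
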